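(* Let $A=\{a_{ij}\}$ be a real $N\times N$ matrix satisfying condition (M), and let $D=\mathrm{diag}(d_{11},\dots,d_{NN})$ with $d_{ii}>0$ for all $i$ and $\sum_{i=1}^N d_{ii}a_{ij}\ge0$ for every $j$. Then for every $\sigma\in[0,1]$ and every $\Delta t>0$ the matrix $E+\Delta t\,\sigma A$ is invertible and $$\frac{\|D\|_1}{\max_j s_j}\le \left\|\left[E+\Delta t\,\sigma A\right]^{-1}\right\|_1\le \frac{\|D\|_1}{\min_j s_j},\qquad s_j:=d_{jj}+\Delta t\,\sigma\sum_{i=1}^N d_{ii}a_{ij}.$$
   Context: $E$ is the $N\times N$ identity. Condition (M) on a real $N\times N$ matrix $A=\{a_{ij}\}$: $a_{ii}\ge 0$ for all $i$ and $a_{ij}\le 0$ for all $i\ne j$. For vectors $\|y\|_1=\sum_i|y_i|$ and for matrices $\|A\|_1=\max_j\sum_i|a_{ij}|$ (so $\|D\|_1=\max_i d_{ii}$). *)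

(* Defs.v *)
From mathcomp Require Import all_boot all_order all_algebra.
Set Implicit Arguments. Unset Strict Implicit. Unset Printing Implicit Defensive.
Import Order.TTheory GRing.Theory Num.Theory.
Local Open Scope ring_scope.

Definition condM (R : realFieldType) (n : nat) (A : 'M[R]_n) : Prop :=
  (forall i, 0 <= A i i) /\ (forall i j, i != j -> A i j <= 0).

Definition mxnorm1 (R : realFieldType) (n : nat) (A : 'M[R]_n.+1) : R :=
  \big[Num.max/0]_(j < n.+1) \sum_(i < n.+1) `|A i j|.

Definition fmax (R : realFieldType) (n : nat) (s : 'I_n.+1 -> R) : R :=
  \big[Num.max/s ord0]_(j < n.+1) s j.
Definition fmin (R : realFieldType) (n : nat) (s : 'I_n.+1 -> R) : R :=
  \big[Num.min/s ord0]_(j < n.+1) s j.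

(* Main.v *)
Require Import Defs.
From mathcomp Require Import all_boot all_order all_algebra.
From mathcomp Require Import lra.
Import Order.TTheory GRing.Theory Num.Theory.
Local Open Scope ring_scope.

Lemma row_ineq (R : realFieldType) (n : nat) (b y : 'I_n.+1 -> R) (i : 'I_n.+1)
  (hbi : 0 <= b i) (hbk : forall k, k != i -> b k <= 0) :
  \sum_k b k * `|y k| <= `| \sum_k b k * y k |.
Proof.
rewrite (bigD1 i) //= [X in _ <= `|X|](bigD1 i) //=.
have h1 : \sum_(k | k != i) b k * `|y k| = - \sum_(k | k != i) `|b k * y k|.
  rewrite -sumrN; apply: eq_bigr => k hk.
  by rewrite normrM (ler0_norm (hbk k hk)) mulNr opprK.
rewrite h1; apply: le_trans (lerB_normD _ _).
rewrite normrM (ger0_norm hbi) lerD2l lerN2.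
exact: ler_norm_sum.
Qed.

Lemma col_le_norm (R : realFieldType) (n : nat) (B : 'M[R]_n.+1) (j : 'I_n.+1) :
  \sum_i `|B i j| <= mxnorm1 B.
Proof. by rewrite /mxnorm1; exact: le_bigmax. Qed.

(* N = n.+1 >= 1 is the dimension. *)
Theorem theorem2 (R : realFieldType) (n : nat) (A D : 'M[R]_n.+1)
  (hA : condM A)
  (hDdiag : forall i j, i != j -> D i j = 0)
  (hDpos : forall i, 0 < D i i)
  (hDA : forall j, 0 <= \sum_(i < n.+1) D i i * A i j)
  (sigma dt : R) (hs0 : 0 <= sigma) (hs1 : sigma <= 1) (hdt : 0 < dt) :
  let M := 1%:M + (dt * sigma) *: A in
  let s := fun j : 'I_n.+1 => D j j + dt * sigma * \sum_(i < n.+1) D i i * A i j in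
  M \in unitmx /\
  mxnorm1 D / fmax s <= mxnorm1 (invmx M) /\
  mxnorm1 (invmx M) <= mxnorm1 D / fmin s.
Proof.
move=> M s.
case: hA => hAd hAo.
have hc : 0 <= dt * sigma by apply: mulr_ge0 => //; apply: ltW.
have ME : forall i k, M i k = (i == k)%:R + dt * sigma * A i k.
  by move=> i k; rewrite /M !mxE.
have hsum : forall k, \sum_i D i i * M i k = s k.
  move=> k; rewrite /s.
  under eq_bigr do rewrite ME mulrDr.
  rewrite big_split /= (bigD1 k) //= eqxx mulr1 big1 ?addr0; last first.
    by move=> i /negbTE ->; rewrite mulr0.
  congr (_ + _); rewrite mulr_sumr; apply: eq_bigr => i _; by rewrite mulrCA.
have spos : forall k, 0 < s k.
  move=> k; rewrite /s; have := hDpos k; have := mulr_ge0 hc (hDA k); lra.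
have key : forall y : 'I_n.+1 -> R,
    \sum_k s k * `|y k| <= \sum_i D i i * `|\sum_k M i k * y k|.
  move=> y.
  have per : forall i, \sum_k (D i i * M i k) * `|y k| <= D i i * `|\sum_k M i k * y k|.
    move=> i.
    rewrite -(ger0_norm (ltW (hDpos i))) -normrM mulr_sumr.
    under [X in _ <= `|X|]eq_bigr do rewrite mulrA.
    rewrite (ger0_norm (ltW (hDpos i))).
    apply: (@row_ineq R n (fun k => D i i * M i k) y i).
      rewrite /=; apply: mulr_ge0; first exact: ltW.
      rewrite /= ME; rewrite eqxx; apply: addr_ge0 => //; exact: mulr_ge0 hc (hAd i).
    move=> k hk; apply: mulr_ge0_le0; first exact: ltW.
    rewrite ME eq_sym (negbTE hk) add0r; apply: mulr_ge0_le0 => //.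
    by apply: hAo; rewrite eq_sym.
  under eq_bigr do rewrite -hsum mulr_suml.
  rewrite exchange_big /=; exact: ler_sum.
have hunit : M \in unitmx.
  rewrite unitmxE unitfE -det_tr; apply/det0P => -[v vn0 vM].
  have hrow : forall j, \sum_k M j k * v 0 k = 0.
    move=> j; have h := congr1 (fun W : 'M[R]_(1, n.+1) => W 0 j) vM; rewrite !mxE in h; rewrite -[RHS]h.
    by apply: eq_bigr => k _; rewrite !mxE mulrC.
  have := key (fun k => v 0 k).
  under [X in _ <= X]eq_bigr do rewrite hrow normr0 mulr0.
  rewrite big1_eq => hle.
  have h0 : \sum_k s k * `|v 0 k| = 0.
    apply/eqP; rewrite eq_le hle /=; apply: sumr_ge0 => k _.
    by apply: mulr_ge0; [apply: ltW|].
  move/eqP: vn0; apply; apply/matrixP => i k; rewrite ord1 mxE.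
  have := (@psumr_eq0P R _ xpredT (fun k => s k * `|v 0 k|) (fun k _ => mulr_ge0 (ltW (spos k)) (normr_ge0 (v 0 k))) h0 k isT).
  move/eqP; rewrite mulf_eq0 (gt_eqF (spos k)) normr_eq0 /=; by move/eqP.
split=> //.
set X := invmx M.
have hMX : forall i j, \sum_k M i k * X k j = (i == j)%:R.
  move=> i j; have := congr1 (fun W : 'M[R]_n.+1 => W i j) (mulmxV hunit).
  by rewrite !mxE.
have colb : forall j, \sum_k s k * `|X k j| <= D j j.
  move=> j; apply: le_trans (key (fun k => X k j)) _.
  under eq_bigr do rewrite hMX.
  rewrite (bigD1 j) //= eqxx normr1 mulr1 big1 ?addr0 //.
  by move=> i /negbTE ->; rewrite normr0 mulr0.
have colid : forall j, \sum_k s k * X k j = D j j.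
  move=> j; under eq_bigr do rewrite -hsum mulr_suml.
  rewrite exchange_big /=.
  under eq_bigr do (under eq_bigr do rewrite -mulrA; rewrite -mulr_sumr hMX).
  rewrite (bigD1 j) //= eqxx mulr1 big1 ?addr0 //.
  by move=> i /negbTE ->; rewrite mulr0.
have colD : forall j, \sum_i `|D i j| = D j j.
  move=> j; rewrite (bigD1 j) //= (ger0_norm (ltW (hDpos j))) big1 ?addr0 //.
  by move=> i hi; rewrite hDdiag ?normr0.
have nD0 : 0 <= mxnorm1 D by apply: bigmax_ge_id.
have nX0 : 0 <= mxnorm1 X by apply: bigmax_ge_id.
have DjD : forall j, D j j <= mxnorm1 D.
  by move=> j; rewrite -colD; rewrite /mxnorm1; exact: le_bigmax.
have fminpos : 0 < fmin s.
  rewrite /fmin; apply: (big_ind (fun x => 0 < x)) => //.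
  by move=> x y hx hy; rewrite lt_min hx hy.
have fminle : forall j, fmin s <= s j by move=> j; apply: bigmin_le.
have fmaxge : forall j, s j <= fmax s by move=> j; apply: le_bigmax.
have fmaxpos : 0 < fmax s by apply: lt_le_trans (spos ord0) (fmaxge ord0).
split.
  rewrite (ler_pdivrMr _ _ fmaxpos) mulrC; apply: bigmax_le.
    by apply: mulr_ge0 => //; apply: ltW.
  move=> j _; rewrite colD -colid.
  apply: le_trans (_ : \sum_k fmax s * `|X k j| <= _).
    apply: ler_sum => k _; apply: le_trans (ler_norm _) _.
    rewrite normrM (gtr0_norm (spos k)); apply: ler_wpM2r => //.
  rewrite -mulr_sumr; apply: ler_wpM2l; first exact: ltW.
  exact: col_le_norm.
apply: bigmax_le.
  by apply: divr_ge0 => //; apply: ltW.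
move=> j _; rewrite (ler_pdivlMr _ _ fminpos).
apply: le_trans (DjD j); apply: le_trans (colb j).
rewrite mulr_suml; apply: ler_sum => k _; rewrite mulrC.
by apply: ler_wpM2r.
Qed.
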